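(* Let $\mathcal{N}$ be a cactus network and $u\succcurlyeq v$ vertices of $\mathcal{N}$. Then the union of all directed paths from $u$ to $v$ is a branching path, i.e., there exist $m\ge0$ and vertices $s_1,t_1,\dots,s_m,t_m$ such that this union equals the union of the pieces of the alternating sequence $$u\rightarrow s_1\rightrightarrows t_1\rightarrow s_2\rightrightarrows t_2\rightarrow\cdots\rightarrow s_m\rightrightarrows t_m\rightarrow v,$$ where each $x\rightarrow y$ denotes the unique directed path from $x$ to $y$ (possibly of length $0$; uniqueness being part of the claim), and each $s_j\rightrightarrows t_j$ is a simple branching path.
   Context: A cactus network is a finite directed acyclic graph $\mathcal{N}$ with a unique vertex of indegree $0$ (the root) such that in its underlying undirected graph $\mathcal{N}^\star$ every edge belongs to at most one simple cycle. $u\succcurlyeq v$ means there is a directed path (possibly of length $0$) from $u$ to $v$. A lowest common ancestor of a set $V$ is a vertex $u$ that is an ancestor of all of $V$ with no proper descendant having this property; in a cactus network it is unique. A sink is a vertex of indegree $2$. If $t$ is a sink with parents $p_l,p_r$, its source is the lowest common ancestor $s$ of $\{p_l,p_r\}$; the directed paths from $s$ to $p_l$ and from $s$ to $p_r$ are unique and edge-disjoint, and appending the edges $(p_l,t)$, $(p_r,t)$ gives two paths $P_1,P_2$ from $s$ to $t$. The unordered pair $\{P_1,P_2\}$ (viewed as the union of these two paths) is called a simple branching path, denoted $s\rightrightarrows t$, and $P_1,P_2$ are its branches. *)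

(* Defs.v *)
From mathcomp Require Import all_boot.
Set Implicit Arguments. Unset Strict Implicit. Unset Printing Implicit Defensive.

Section Cactus.
Variables (V : finType) (e : rel V).

(* u >= v : a directed path (possibly of length 0) from u to v *)
Definition anc (u v : V) : Prop := connect e u v.

(* p is (the tail of) a directed path from x to y, i.e. x :: p is the vertex sequence *)
Definition dpath (x y : V) (p : seq V) : bool := path e x p && (last x p == y).

Definition pverts (x : V) (p : seq V) : seq V := x :: p.
Definition pedges (x : V) (p : seq V) : seq (V * V) := zip (x :: p) p.

Definition acyclic : Prop := forall x p, path e x p -> last x p = x -> p = [::].

Definition unique_root : Prop :=
  exists r : V, forall v : V, (forall w, ~~ e w v) <-> v = r.

Definition uadj (x y : V) : bool := e x y || e y x.

Definition usimple_cycle (c : seq V) : bool := [&& uniq c, 3 <= size c & cycle uadj c].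

Definition ucedge (c : seq V) (a b : V) : Prop :=
  ((a, b) \in zip c (rot 1 c)) \/ ((b, a) \in zip c (rot 1 c)).

(* every edge of the underlying undirected graph lies on at most one simple cycle
   (two simple cycles sharing an edge have the same edge set, i.e. are the same cycle) *)
Definition cactus_cond : Prop :=
  forall (c1 c2 : seq V) (a b : V), usimple_cycle c1 -> usimple_cycle c2 ->
    ucedge c1 a b -> ucedge c2 a b -> forall x y, ucedge c1 x y <-> ucedge c2 x y.

Definition cactus_network : Prop := acyclic /\ unique_root /\ cactus_cond.

Definition is_lca (a b w : V) : Prop :=
  anc w a /\ anc w b /\ forall w', anc w w' -> w' <> w -> ~ (anc w' a /\ anc w' b).

Definition sink (t : V) : Prop := #|[set w | e w t]| = 2.

Definition simple_branching (s t : V) : Prop :=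
  sink t /\ exists pl pr, [/\ pl <> pr, e pl t, e pr t & is_lca pl pr s].

(* vertices/edges of the union of the two branches of s =>> t
   (the branches are the paths s -> p -> t over the two parents p of t) *)
Definition sbp_vert (s t z : V) : Prop :=
  z = t \/ exists w p, [/\ e w t, dpath s w p & z \in pverts s p].
Definition sbp_edge (s t a b : V) : Prop :=
  exists w p, [/\ e w t, dpath s w p & ((a, b) \in pedges s p \/ (a, b) = (w, t))].

Definition allp_vert (x y z : V) : Prop := exists p, dpath x y p /\ z \in pverts x p.
Definition allp_edge (x y a b : V) : Prop :=
  exists p, dpath x y p /\ (a, b) \in pedges x p.

(* for st = [:: (s1,t1); ...; (sm,tm)], the "->" links
   (u,s1), (t1,s2), ..., (tm,v)   (or (u,v) if m = 0) *)
Definition links (u v : V) (st : seq (V * V)) : seq (V * V) :=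
  zip (u :: map snd st) (rcons (map fst st) v).

End Cactus.

(* Main.v *)
Require Import Defs.
From mathcomp Require Import all_boot.
Set Implicit Arguments. Unset Strict Implicit. Unset Printing Implicit Defensive.

Section Aux.
Variables (V : finType) (e : rel V).
Hypothesis acy : acyclic e.

Lemma mem_zip2 (S T : eqType) (s : seq S) (t : seq T) a b :
  (a, b) \in zip s t -> a \in s /\ b \in t.
Proof.
elim: s t => [|x s IH] [|y t] //=.
rewrite in_cons => /orP [/eqP [-> ->]|/IH [h1 h2]].
  by rewrite !in_cons !eqxx.
by rewrite !in_cons h1 h2 !orbT.
Qed.

Lemma zip_consr (T : Type) (x z : T) s :
  zip (x :: s) (rcons s z) = rcons (zip (belast x s) s) (last x s, z).
Proof. by rewrite lastI zip_rcons // size_belast. Qed.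

Lemma zip_head (T : eqType) (x y : T) R : (x, head y R) \in zip (x :: R) (rcons R y).
Proof. by case: R => [|h R] /=; rewrite in_cons eqxx. Qed.

Lemma zip_v (T : eqType) (x y b : T) R : x \notin R ->
  (x, b) \in zip (x :: R) (rcons R y) -> b = head y R.
Proof.
case: R => [|h R] /=; rewrite in_cons.
  by move=> _ /orP [/eqP [->]|].
move=> Hx /orP [/eqP [->] //|/mem_zip2 [H _]].
by move: Hx; rewrite -in_cons H.
Qed.

Lemma zip_w (T : eqType) (x z b : T) s : z \notin s ->
  (b, z) \in zip (x :: s) (rcons s z) -> b = last x s.
Proof.
rewrite zip_consr mem_rcons in_cons => Hz /orP [/eqP [->] //|/mem_zip2 [_ H]].
by rewrite H in Hz.
Qed.

Lemma pedges_cat (x : V) p q : pedges x (p ++ q) = pedges x p ++ pedges (last x p) q.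
Proof. rewrite /pedges; elim: p x => [|h p IH] x //=; by rewrite IH. Qed.

Lemma pverts_cat (x : V) p q z : (z \in pverts x (p ++ q)) = (z \in pverts x p) || (z \in pverts (last x p) q).
Proof.
rewrite /pverts !in_cons mem_cat.
have := mem_last x p; rewrite in_cons.
case: (z =P last x p) => [->|/eqP/negbTE Hz].
  by case/orP=> ->; rewrite ?orbT.
by move=> _; rewrite orFb orbA.
Qed.

Lemma dpath_cat x y z p q : dpath e x y p -> dpath e y z q -> dpath e x z (p ++ q).
Proof.
by case/andP=> Hp /eqP Hl /andP [Hq Hl2]; rewrite /dpath cat_path Hp last_cat Hl Hq.
Qed.

Lemma dpath_rcons x w y p : dpath e x w p -> e w y -> dpath e x y (rcons p y).
Proof.
by case/andP=> Hp /eqP Hl He; rewrite /dpath rcons_path Hp Hl He last_rcons eqxx.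
Qed.

Lemma dpath_connect x y p : dpath e x y p -> connect e x y.
Proof. by case/andP=> Hp /eqP Hl; apply/connectP; exists p. Qed.

Lemma connect_dpath x y : connect e x y -> exists p, dpath e x y p.
Proof. by case/connectP=> p Hp ->; exists p; rewrite /dpath Hp eqxx. Qed.

Lemma dpath_split x y z p : dpath e x y p -> z \in x :: p ->
  exists p1 p2, [/\ p = p1 ++ p2, dpath e x z p1 & dpath e z y p2].
Proof.
move=> Hp Hz; move: Hp; case/splitPl: Hz => p1 p2 Hl.
case/andP; rewrite cat_path last_cat Hl => /andP [H1 H2] H3.
by exists p1, p2; rewrite /dpath H1 H2 H3 Hl eqxx.
Qed.

Lemma dpath_mem x y z p : dpath e x y p -> z \in x :: p -> connect e x z /\ connect e z y.
Proof.
move=> Hp Hz; have [p1 [p2 [_ H1 H2]]] := dpath_split Hp Hz.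
by split; apply: dpath_connect; eassumption.
Qed.

Lemma acyc_nil x p : dpath e x x p -> p = [::].
Proof. by case/andP=> Hp /eqP Hl; apply: acy Hp Hl. Qed.

Lemma connect_antisym a b : connect e a b -> connect e b a -> a = b.
Proof.
move=> /connect_dpath [p Hp] /connect_dpath [q Hq].
have := acyc_nil (dpath_cat Hp Hq).
by case: p Hp => [|//] /andP [_ /eqP].
Qed.

Lemma no_back x y : connect e x y -> e y x -> False.
Proof.
move=> /connect_dpath [p Hp] He.
by have := acyc_nil (dpath_rcons Hp He); case: p {Hp}.
Qed.

Lemma edge_neq x y : e x y -> x <> y.
Proof. by move=> He Exy; subst; apply: (no_back (connect0 e y) He). Qed.

Lemma path_uniq x p : path e x p -> uniq (x :: p).
Proof.
elim: p x => [|h p IH] x //= /andP [Hxh Hp].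
have /= -> := IH _ Hp; rewrite andbT.
apply/negP => Hx.
have Hd : dpath e h (last h p) p by rewrite /dpath Hp eqxx.
have [c1 _] := dpath_mem Hd Hx.
exact: (no_back c1 Hxh).
Qed.

Lemma dpath_last x y p : dpath e x y p -> x <> y ->
  exists w p', [/\ p = rcons p' y, e w y & dpath e x w p'].
Proof.
case: (lastP p) => [/andP [_ /eqP Hxy] H|p' z]; first by case: H.
case/andP; rewrite rcons_path last_rcons => /andP [Hp He] /eqP Hz _; subst z.
by exists (last x p'), p'; rewrite /dpath Hp eqxx.
Qed.

Lemma dpath_suffix a w q l y r : dpath e a w q -> a :: q = l ++ y :: r -> dpath e y w r.
Proof.
case: l => [|a' l] /= Hq [].
  by move=> Ea Eq; rewrite -Ea -Eq.
move=> _ Eq; move: Hq; rewrite Eq; rewrite /dpath cat_path last_cat /= => /andP [/andP [_ /andP [_ ->]] ->].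
by [].
Qed.

Lemma split_last (P : pred V) x s : P x ->
  exists l y r, [/\ x :: s = l ++ y :: r, P y & all (predC P) r].
Proof.
elim/last_ind: s => [|s z IH] Px.
  by exists [::], x, [::].
case Pz: (P z).
  by exists (x :: s), z, [::]; rewrite cats1.
have [l [y [r [E Py Hr]]]] := IH Px.
exists l, y, (rcons r z); split=> //.
  by rewrite -rcons_cons E rcons_cat.
by rewrite all_rcons /= Pz.
Qed.

End Aux.

Section Cyc.
Variables (V : finType) (e : rel V).
Hypothesis acy : acyclic e.

Lemma cycle_lemma (a wa wb v : V) q1 q2 : dpath e a wa q1 -> dpath e a wb q2 -> wa <> wb ->
  e wa v -> e wb v ->
  exists c y, usimple_cycle e c /\ ucedge c wa v /\ ucedge c wb v /\
   (forall b, ucedge c v b -> b = wa \/ b = wb) /\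
   y \in a :: q1 /\ (exists b, ucedge c y b) /\ (forall z b, ucedge c z b -> z = v \/ connect e y z).
Proof.
move=> H1 H2 Hne Hav Hbv.
have [l [y [S1 [E1 Py HS1]]]] :=
  @split_last _ (fun z => z \in a :: q2) a q1 (mem_head _ _).
have D1 : dpath e y wa S1 := dpath_suffix H1 E1.
have [l2 [S2 E2]] : exists l2 S2, a :: q2 = l2 ++ y :: S2.
  by case/splitPr: Py => p1 p2; exists p1, p2.
have D2 : dpath e y wb S2 := dpath_suffix H2 E2.
have U1 : uniq (y :: S1).
  case/andP: (D1) => Hp1 _. exact: (path_uniq acy Hp1).
have U2 : uniq (y :: S2) by case/andP: (D2) => Hp2 _; exact: (path_uniq acy Hp2).
have Hmem2 : forall z, z \in y :: S2 -> z \in a :: q2.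
  by move=> z Hz; rewrite E2 mem_cat Hz orbT.
have Hv1 : v \notin y :: S1.
  apply/negP => Hv; have [_ c] := dpath_mem D1 Hv. exact: (no_back acy c Hav).
have Hv2 : v \notin y :: S2.
  by apply/negP => Hv; have [_ c] := dpath_mem D2 Hv; exact: (no_back acy c Hbv).
have Hy1 : y \in a :: q1 by rewrite E1 mem_cat mem_head orbT.
have La : last y S1 = wa by case/andP: (D1) => _ /eqP.
have Lb : last y S2 = wb by case/andP: (D2) => _ /eqP.
set R := rev S2.
have HR : head y R = wb.
  rewrite /R -Lb; case: (lastP S2) => [|s z] //=.
  by rewrite rev_rcons last_rcons.
have EZ : zip (y :: S1 ++ v :: R) (rot 1 (y :: S1 ++ v :: R)) =
          zip (y :: S1) (rcons S1 v) ++ zip (v :: R) (rcons R y).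
  have -> : rot 1 (y :: S1 ++ v :: R) = rcons S1 v ++ rcons R y.
    by rewrite rot1_cons rcons_cat rcons_cons cat_rcons.
  by apply: (zip_cat (v :: R) (rcons R y) (s1:=y::S1) (t1:=rcons S1 v)); rewrite size_rcons.
have HvR : v \notin R by rewrite /R mem_rev; move: Hv2; rewrite in_cons negb_or => /andP [].
have HvS1 : v \notin S1 by move: Hv1; rewrite in_cons negb_or => /andP [].
have Hvy : v != y by move: Hv1; rewrite in_cons negb_or => /andP [].
have Hmemc : forall z b, ucedge (y :: S1 ++ v :: R) z b -> z \in y :: S1 ++ v :: R.
  move=> z b [/mem_zip2 [] //|/mem_zip2 [_]]; by rewrite mem_rot.
exists (y :: S1 ++ v :: R); exists y; split; [|split; [|split; [|split; [|split; [|split]]]]].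
- apply/and3P; split.
  + rewrite -cat_cons cat_uniq U1 /= /R rev_uniq mem_rev.
    move: Hv2 U2; rewrite in_cons negb_or /= => /andP [_ ->] /andP [Hy2 ->].
    rewrite andbT negb_or Hv1 /= andbT.
    apply/hasPn => z; rewrite mem_rev => Hz.
    rewrite in_cons negb_or; apply/andP; split.
      by apply/negP => /eqP Ez; subst z; rewrite Hz in Hy2.
    apply/negP => Hz1; move/allP: HS1 => /(_ _ Hz1) /=.
    by rewrite Hmem2 // in_cons Hz orbT.
  + rewrite /= size_cat /= /R size_rev.
    have : size S1 + size S2 != 0.
      rewrite addn_eq0; apply/negP => /andP [/eqP/size0nil HS /eqP/size0nil HS'].
      by move: La Lb; rewrite HS HS' /= => Ea Eb; apply: Hne; rewrite -Ea -Eb.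
    by rewrite addnS; case: (size S1 + size S2).
  + rewrite /cycle rcons_cat rcons_cons cat_path; apply/andP; split.
      by case/andP: (D1) => Hp1 _; apply: sub_path Hp1 => s t Hst; rewrite /uadj Hst.
    rewrite La /= {1}/uadj Hav /=.
    have -> : rcons R y = rev (belast y (rcons S2 v)) by rewrite belast_rcons rev_cons.
    have {1}-> : v = last y (rcons S2 v) by rewrite last_rcons.
    rewrite rev_path; case/andP: (D2) => Hp2 /eqP L2.
    have : path e y (rcons S2 v) by rewrite rcons_path Hp2 L2 Hbv.
    by apply: sub_path => s t Hst; rewrite /uadj Hst orbT.
- left; rewrite EZ mem_cat; apply/orP; left.
  by rewrite zip_consr mem_rcons La mem_head.
- right; rewrite EZ mem_cat; apply/orP; right.
  by rewrite -HR zip_head.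
- move=> b [].
    rewrite EZ mem_cat => /orP [/mem_zip2 [H _]|H].
      by rewrite H in Hv1.
    by right; rewrite (zip_v HvR H).
  rewrite EZ mem_cat => /orP [H|/mem_zip2 [_ H]].
    by left; rewrite (zip_w HvS1 H).
  by move: H; rewrite mem_rcons in_cons (negbTE Hvy) (negbTE HvR).
- exact: Hy1.
- by exists (head v S1); left; rewrite EZ mem_cat zip_head.
- move=> z b /Hmemc; rewrite -cat_cons mem_cat => /orP [Hz|].
    by right; have [] := dpath_mem D1 Hz.
  rewrite in_cons => /orP [/eqP -> |]; first by left.
  rewrite /R mem_rev => Hz; right.
  have Hz' : z \in y :: S2 by rewrite in_cons Hz orbT.
  by have [] := dpath_mem D2 Hz'.
Qed.

End Cyc.

Section Cac.
Variables (V : finType) (e : rel V).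

Lemma ucedgeC (c : seq V) a b : ucedge c a b -> ucedge c b a.
Proof. by case; [right|left]. Qed.

Lemma anc_lt (acy : acyclic e) a b : connect e a b -> a <> b ->
  #|[set x | connect e x a]| < #|[set x | connect e x b]|.
Proof.
move=> Hab Hne; apply: proper_card; apply/properP; split.
  by apply/subsetP => x; rewrite !inE => H; exact: (connect_trans H Hab).
exists b; rewrite !inE ?connect0 //.
by apply/negP => Hba; apply: Hne; exact: (connect_antisym acy Hab Hba).
Qed.

Lemma root_reach (acy : acyclic e) : unique_root e -> exists r, forall z, connect e r z.
Proof.
move=> [r Hr]; exists r => z.
pose A x := #|[set y | connect e y x]|.
case: (@arg_minnP _ z (fun x => connect e x z) A (connect0 e z)) => a Ha Hmin.
have Hnp : forall w, ~~ e w a.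
  move=> w; apply/negP => Hwa.
  have Hw : connect e w z := connect_trans (connect1 Hwa) Ha.
  have H1 := Hmin w Hw.
  have H2 : A w < A a by apply: (anc_lt acy (connect1 Hwa)); exact: (edge_neq acy Hwa).
  by move: (leq_trans H2 H1); rewrite ltnn.
by have := (Hr a).1 Hnp => <-.
Qed.

Lemma cactus_key u w1 w2 v : cactus_network e -> connect e u w1 -> connect e u w2 ->
  w1 <> w2 -> e w1 v -> e w2 v ->
  (forall w, e w v -> w = w1 \/ w = w2) /\
  exists s, [/\ is_lca e w1 w2 s, connect e u s &
     forall w p, w = w1 \/ w = w2 -> dpath e u w p -> s \in u :: p].
Proof.
move=> [acy [ur cc]] Hu1 Hu2 Hne H1 H2.
have [p1 D1] := connect_dpath Hu1.
have [p2 D2] := connect_dpath Hu2.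
have [C [s [UC [C1 [C2 [Cv [Hs [[b0 Hb0] Cz]]]]]]]] := cycle_lemma acy D1 D2 Hne H1 H2.
have nv : forall z, connect e z w1 -> z <> v.
  by move=> z Hz Hzv; subst z; exact: (no_back acy Hz H1).
have [Hus Hs1] := dpath_mem D1 Hs.
have Hs2 : connect e s w2.
  case: (Cz w2 v C2) => // Hw2v; exfalso; exact: (edge_neq acy H2 Hw2v).
split.
  move=> w Hw.
  case: (w =P w1) => [->|Hw1]; first by left.
  case: (w =P w2) => [->|Hw2]; first by right.
  exfalso.
  have [r Hr] := root_reach acy ur.
  have [r1 Dr1] := connect_dpath (Hr w1).
  have [r2 Dr2] := connect_dpath (Hr w).
  have Hne' : w1 <> w by move=> E; apply: Hw1; rewrite E.
  have [C3 [y3 [UC3 [C31 [_ [Cv3 _]]]]]] := cycle_lemma acy Dr1 Dr2 Hne' H1 Hw.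
  have := (cc C C3 w1 v UC UC3 C1 C31 v w2).1 (ucedgeC C2).
  by case/Cv3 => E; [apply: Hne|apply: Hw2]; rewrite E.
exists s; split => //.
  split => //; split => //.
  move=> w' Hsw' Hne' [Hw'1 Hw'2].
  have [q1 Q1] := connect_dpath Hw'1.
  have [q2 Q2] := connect_dpath Hw'2.
  have [C' [y' [UC' [C'1 [_ [_ [Hy' [_ Cz']]]]]]]] := cycle_lemma acy Q1 Q2 Hne H1 H2.
  have := (cc C C' w1 v UC UC' C1 C'1 s b0).1 Hb0.
  case/Cz' => [Esv|Hy's]; first by exact: (nv s Hs1 Esv).
  have [Hw'y' _] := dpath_mem Q1 Hy'.
  by apply: Hne'; symmetry; apply: (connect_antisym acy Hsw'); exact: (connect_trans Hw'y' Hy's).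
move=> w p Hw Dp.
have key : forall C'' y'', usimple_cycle e C'' -> ucedge C'' w1 v -> y'' \in u :: p ->
   (exists b, ucedge C'' y'' b) -> (forall z b, ucedge C'' z b -> z = v \/ connect e y'' z) ->
   s \in u :: p.
  move=> C'' y'' UC'' C''1 Hy'' [b Hb] Cz''.
  have E := cc C C'' w1 v UC UC'' C1 C''1.
  case: (Cz'' s b0 ((E s b0).1 Hb0)) => [Esv|Hy''s]; first by case: (nv s Hs1 Esv).
  case: (Cz y'' b ((E y'' b).2 Hb)) => [Eyv|Hsy''].
    have [_ Hyw] := dpath_mem Dp Hy''.
    by exfalso; case: Hw => Ew; subst w; subst y''; [exact: (no_back acy Hyw H1)|exact: (no_back acy Hyw H2)].
  by rewrite (connect_antisym acy Hsy'' Hy''s).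
case: Hw => Ew; subst w.
  have [C'' [y'' [UC'' [C''1 [_ [_ [Hy'' [Hb Cz'']]]]]]]] := cycle_lemma acy Dp D2 Hne H1 H2.
  exact: (key C'' y'').
have Hne2 : w2 <> w1 by move=> E; apply: Hne.
have [C'' [y'' [UC'' [_ [C''1 [_ [Hy'' [Hb Cz'']]]]]]]] := cycle_lemma acy Dp D1 Hne2 H2 H1.
exact: (key C'' y'').
Qed.

End Cac.

Section Main.
Variables (V : finType) (e : rel V).

Definition GoalP (u v : V) :=
  exists st : seq (V * V),
    (forall x y, (x, y) \in links u v st -> exists! p, dpath e x y p) /\
    (forall s t, (s, t) \in st -> simple_branching e s t) /\
    (forall z, allp_vert e u v z <->
       (exists2 l, l \in links u v st & allp_vert e l.1 l.2 z) \/
       (exists2 q, q \in st & sbp_vert e q.1 q.2 z)) /\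
    (forall a b, allp_edge e u v a b <->
       (exists2 l, l \in links u v st & allp_edge e l.1 l.2 a b) \/
       (exists2 q, q \in st & sbp_edge e q.1 q.2 a b)).

Lemma links_rcons (u y : V) st :
  links u y st = rcons (zip (belast u (map snd st)) (map fst st)) (last u (map snd st), y).
Proof. by rewrite /links lastI zip_rcons // size_belast !size_map. Qed.

Lemma links_rcons2 (u s t v : V) st :
  links u v (rcons st (s, t)) = rcons (links u s st) (t, v).
Proof.
rewrite /links !map_rcons -rcons_cons zip_rcons //=.
by rewrite size_rcons !size_map.
Qed.

Lemma pedges_rcons (x y : V) p : pedges x (rcons p y) = rcons (pedges x p) (last x p, y).
Proof. by rewrite -cats1 pedges_cat cats1. Qed.

Lemma pverts_rcons (x y z : V) p : (z \in pverts x (rcons p y)) = (z == y) || (z \in pverts x p).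
Proof. by rewrite /pverts -rcons_cons mem_rcons in_cons. Qed.

Hypothesis acy : acyclic e.

Lemma self_unique (v : V) : exists! p, dpath e v v p.
Proof.
exists [::]; split; first by rewrite /dpath /= eqxx.
by move=> q Dq; rewrite (acyc_nil acy Dq).
Qed.

Lemma allp_self (v z : V) : allp_vert e v v z -> z = v.
Proof.
by case=> p [Dp]; rewrite (acyc_nil acy Dp) /pverts in_cons orbF => /eqP.
Qed.

Lemma allpe_self (v a b : V) : ~ allp_edge e v v a b.
Proof. by case=> p [Dp]; rewrite (acyc_nil acy Dp). Qed.

Lemma nil_goal u v : (exists! p, dpath e u v p) -> GoalP u v.
Proof.
move=> Hu; exists [::]; split.
  by move=> x y; rewrite /links /= in_cons orbF => /eqP [-> ->].
split => //; split.
  move=> z; split.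
    by move=> H; left; exists (u, v) => //; rewrite mem_head.
  by case=> [[l]|[q]] //; rewrite /links /= in_cons orbF => /eqP ->.
move=> a b; split.
  by move=> H; left; exists (u, v) => //; rewrite mem_head.
by case=> [[l]|[q]] //; rewrite /links /= in_cons orbF => /eqP ->.
Qed.

Lemma one_parent x w0 v : connect e x w0 -> e w0 v ->
  (forall w, e w v -> connect e x w -> w = w0) ->
  (forall z, allp_vert e x v z <-> z = v \/ allp_vert e x w0 z) /\
  (forall a b, allp_edge e x v a b <-> (a, b) = (w0, v) \/ allp_edge e x w0 a b) /\
  ((exists! p, dpath e x w0 p) -> exists! p, dpath e x v p).
Proof.
move=> Hxw0 Hw0 Hpar.
have Hxv : x <> v by move=> E; subst x; exact: (no_back acy Hxw0 Hw0).
have dec : forall p, dpath e x v p -> exists p', p = rcons p' v /\ dpath e x w0 p'.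
  move=> p Dp; have [w [p' [Ep Hw Dp']]] := dpath_last Dp Hxv.
  have Ew := Hpar w Hw (dpath_connect Dp'); subst w.
  by exists p'.
have [p0 D0] := connect_dpath Hxw0.
split; [|split].
- move=> z; split.
    case=> p [Dp Hz]; have [p' [Ep Dp']] := dec p Dp; subst p.
    move: Hz; rewrite pverts_rcons => /orP [/eqP ->|Hz]; first by left.
    by right; exists p'.
  case=> [->|[p' [Dp' Hz]]].
    by exists (rcons p0 v); split; [exact: dpath_rcons D0 Hw0|rewrite pverts_rcons eqxx].
  by exists (rcons p' v); split; [exact: dpath_rcons Dp' Hw0|rewrite pverts_rcons Hz orbT].
- move=> a b; split.
    case=> p [Dp Hz]; have [p' [Ep Dp']] := dec p Dp; subst p.
    move: Hz; rewrite pedges_rcons mem_rcons in_cons => /orP [/eqP ->|Hz].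
      by left; case/andP: Dp' => _ /eqP ->.
    by right; exists p'.
  case=> [Eab|[p' [Dp' Hz]]].
    exists (rcons p0 v); split; first exact: dpath_rcons D0 Hw0.
    by rewrite pedges_rcons mem_rcons in_cons Eab; case/andP: D0 => _ /eqP ->; rewrite eqxx.
  by exists (rcons p' v); split; [exact: dpath_rcons Dp' Hw0|rewrite pedges_rcons mem_rcons in_cons Hz orbT].
- case=> p1 [D1 U1]; exists (rcons p1 v); split; first exact: dpath_rcons D1 Hw0.
  move=> q Dq; have [q' [Eq Dq']] := dec q Dq; subst q.
  by rewrite (U1 q' Dq').
Qed.

Lemma two_parent u s v w1 w2 : connect e u s -> connect e s w1 -> connect e s w2 ->
  e w1 v -> e w2 v -> (forall w, e w v -> w = w1 \/ w = w2) -> u <> v ->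
  (forall w p, w = w1 \/ w = w2 -> dpath e u w p -> s \in u :: p) ->
  (forall z, allp_vert e u v z <-> allp_vert e u s z \/ sbp_vert e s v z) /\
  (forall a b, allp_edge e u v a b <-> allp_edge e u s a b \/ sbp_edge e s v a b).
Proof.
move=> Hus Hs1 Hs2 H1 H2 Hpar Huv Hthru.
have dec : forall p, dpath e u v p -> exists w p1 p2,
    [/\ p = rcons (p1 ++ p2) v, e w v, dpath e u s p1 & dpath e s w p2].
  move=> p Dp; have [w [p' [Ep Hw Dp']]] := dpath_last Dp Huv.
  have Hsp := Hthru w p' (Hpar w Hw) Dp'.
  have [p1 [p2 [Ep' D1 D2]]] := dpath_split Dp' Hsp.
  by exists w, p1, p2; rewrite Ep Ep'.
have [pu Du] := connect_dpath Hus.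
have [q1 Q1] := connect_dpath Hs1.
have Ls : forall p, dpath e u s p -> last u p = s by move=> p /andP [_ /eqP].
split.
- move=> z; split.
    case=> p [Dp Hz]; have [w [p1 [p2 [Ep Hw D1 D2]]]] := dec p Dp; subst p.
    move: Hz; rewrite pverts_rcons => /orP [/eqP ->|]; first by right; left.
    rewrite pverts_cat (Ls _ D1) => /orP [Hz|Hz]; first by left; exists p1.
    by right; right; exists w, p2.
  case=> [[p1 [D1 Hz]]|[->|[w [q [Hw Dq Hz]]]]].
  + exists (p1 ++ rcons q1 v); split; first exact: dpath_cat D1 (dpath_rcons Q1 H1).
    by rewrite pverts_cat Hz.
  + exists (pu ++ rcons q1 v); split; first exact: dpath_cat Du (dpath_rcons Q1 H1).
    by rewrite pverts_cat (Ls _ Du) pverts_rcons eqxx orbT.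
  + exists (pu ++ rcons q v); split; first exact: dpath_cat Du (dpath_rcons Dq Hw).
    by rewrite pverts_cat (Ls _ Du) pverts_rcons Hz !orbT.
- move=> a b; split.
    case=> p [Dp Hz]; have [w [p1 [p2 [Ep Hw D1 D2]]]] := dec p Dp; subst p.
    move: Hz; rewrite pedges_rcons mem_rcons in_cons => /orP [/eqP Eab|].
      right; exists w, p2; split => //; right.
      by rewrite Eab last_cat (Ls _ D1); case/andP: D2 => _ /eqP ->.
    rewrite pedges_cat mem_cat (Ls _ D1) => /orP [Hz|Hz]; first by left; exists p1.
    by right; exists w, p2; split => //; left.
  case=> [[p1 [D1 Hz]]|[w [q [Hw Dq Hz]]]].
  + exists (p1 ++ rcons q1 v); split; first exact: dpath_cat D1 (dpath_rcons Q1 H1).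
    by rewrite pedges_cat mem_cat Hz.
  + exists (pu ++ rcons q v); split; first exact: dpath_cat Du (dpath_rcons Dq Hw).
    rewrite pedges_cat mem_cat (Ls _ Du) pedges_rcons mem_rcons in_cons.
    case: Hz => [->|->]; first by rewrite !orbT.
    by case/andP: Dq => _ /eqP ->; rewrite eqxx orbT.
Qed.

End Main.

Section M.
Variables (V : finType) (e : rel V).

Lemma main (cn : cactus_network e) (u : V) :
  forall n v, #|[set x | connect e x v]| < n -> connect e u v -> GoalP e u v.
Proof.
have acy : acyclic e by case: cn.
elim => [//|n IH] v Hn Huv.
case: (u =P v) => [<-|Huv']; first exact: (nil_goal (self_unique acy u)).
have [p Dp] := connect_dpath Huv.
have [w0 [p0 [_ Hw0 Dp0]]] := dpath_last Dp Huv'.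
have Huw0 := dpath_connect Dp0.
have ltA : forall s, connect e s v -> s <> v -> #|[set x | connect e x s]| < n.
  move=> s Hsv Hne; apply: (leq_trans (anc_lt acy Hsv Hne)); by rewrite -ltnS.
case: (boolP [exists w, (w != w0) && e w v && connect e u w]) =>
  [/existsP [w /andP [/andP [Hne Hw] Huw]] | Hno].
- have Hne' : w <> w0 by apply/eqP.
  have [Hpar [s [Hlca Hus Hthru]]] := cactus_key cn Huw Huw0 Hne' Hw Hw0.
  have [Hsw [Hsw0 _]] := Hlca.
  have Hsv : connect e s v := connect_trans Hsw (connect1 Hw).
  have Hsnv : s <> v by move=> E; subst s; exact: (no_back acy Hsw Hw).
  have [st [G1 [G2 [G3 G4]]]] := IH s (ltA s Hsv Hsnv) Hus.
  have [L1 L2] := two_parent Hus Hsw Hsw0 Hw Hw0 Hpar Huv' Hthru.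
  exists (rcons st (s, v)); rewrite links_rcons2; split; [|split; [|split]].
  + move=> x y; rewrite mem_rcons in_cons => /orP [/eqP [-> ->]|H].
      exact: self_unique.
    exact: G1.
  + move=> a b; rewrite mem_rcons in_cons => /orP [/eqP [-> ->]|H]; last exact: G2.
    split; rewrite /sink.
      have -> : [set x | e x v] = [set w; w0].
        apply/setP => x; rewrite !inE; apply/idP/idP => [/Hpar [->|->]|/orP [/eqP ->|/eqP ->]] //.
          by rewrite eqxx.
        by rewrite eqxx orbT.
      by rewrite cards2 Hne.
    by exists w, w0; split.
  + move=> z; split.
      move/L1 => [/G3 [[l Hl Hz]|[q Hq Hz]]|Hz].
      * by left; exists l => //; rewrite mem_rcons in_cons Hl orbT.
      * by right; exists q => //; rewrite mem_rcons in_cons Hq orbT.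
      * by right; exists (s, v) => //; rewrite mem_rcons mem_head.
    case=> [[l Hl Hz]|[q Hq Hz]]; [move: Hl Hz|move: Hq Hz]; rewrite mem_rcons in_cons => /orP [/eqP El|Hl].
    * by subst l => Hz; apply/L1; right; left; exact: (allp_self acy Hz).
    * by move=> Hz; apply/L1; left; apply/G3; left; exists l.
    * by subst q => Hz; apply/L1; right.
    * by move=> Hz; apply/L1; left; apply/G3; right; exists q.
  + move=> a b; split.
      move/L2 => [/G4 [[l Hl Hz]|[q Hq Hz]]|Hz].
      * by left; exists l => //; rewrite mem_rcons in_cons Hl orbT.
      * by right; exists q => //; rewrite mem_rcons in_cons Hq orbT.
      * by right; exists (s, v) => //; rewrite mem_rcons mem_head.
    case=> [[l Hl Hz]|[q Hq Hz]]; [move: Hl Hz|move: Hq Hz]; rewrite mem_rcons in_cons => /orP [/eqP El|Hl].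
    * by subst l => Hz; case: (allpe_self acy Hz).
    * by move=> Hz; apply/L2; left; apply/G4; left; exists l.
    * by subst q => Hz; apply/L2; right.
    * by move=> Hz; apply/L2; left; apply/G4; right; exists q.
- have Hpar : forall w, e w v -> connect e u w -> w = w0.
    move=> w Hw Huw; apply/eqP; apply: contraNT Hno => Hne.
    by apply/existsP; exists w; rewrite Hne Hw Huw.
  have Hw0nv : w0 <> v by exact: (edge_neq acy Hw0).
  have [st [G1 [G2 [G3 G4]]]] := IH w0 (ltA w0 (connect1 Hw0) Hw0nv) Huw0.
  have [O1 [O2 O3]] := one_parent acy Huw0 Hw0 Hpar.
  rewrite links_rcons in G1 G3 G4.
  set t := last u (map snd st) in G1 G3 G4.
  set K := zip _ _ in G1 G3 G4.
  have Htl : (t, w0) \in rcons K (t, w0) by rewrite mem_rcons mem_head.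
  have [pt [Dpt _]] := G1 t w0 Htl.
  have Htw0 := dpath_connect Dpt.
  have Htu : connect e u t.
    have : allp_vert e u w0 t by apply/G3; left; exists (t, w0) => //; exists pt; rewrite /pverts mem_head.
    by case=> q [Dq Hq]; have [] := dpath_mem Dq Hq.
  have Hpart : forall w, e w v -> connect e t w -> w = w0.
    by move=> w Hw Htw; apply: Hpar Hw (connect_trans Htu Htw).
  have [T1 [T2 T3]] := one_parent acy Htw0 Hw0 Hpart.
  exists st; rewrite links_rcons -/t -/K; split; [|split; [|split]].
  + move=> x y; rewrite mem_rcons in_cons => /orP [/eqP [-> ->]|H].
      by apply: T3; apply: G1.
    by apply: G1; rewrite mem_rcons in_cons H orbT.
  + exact: G2.
  + move=> z; split.
      move/O1 => [Ez|/G3 [[l Hl Hz]|Hq]].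
      * by left; exists (t, v); [rewrite mem_rcons mem_head|apply/T1; left].
      * move: Hl; rewrite mem_rcons in_cons => /orP [/eqP El|Hl].
          by subst l; left; exists (t, v); [rewrite mem_rcons mem_head|apply/T1; right].
        by left; exists l => //; rewrite mem_rcons in_cons Hl orbT.
      * by right.
    case=> [[l Hl Hz]|Hq].
    * move: Hl; rewrite mem_rcons in_cons => /orP [/eqP El|Hl].
        subst l; move/T1: Hz => [Ez|Hz]; apply/O1; first by left.
        by right; apply/G3; left; exists (t, w0).
      by apply/O1; right; apply/G3; left; exists l => //; rewrite mem_rcons in_cons Hl orbT.
    * by apply/O1; right; apply/G3; right.
  + move=> a b; split.
      move/O2 => [Ez|/G4 [[l Hl Hz]|Hq]].
      * by left; exists (t, v); [rewrite mem_rcons mem_head|apply/T2; left].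
      * move: Hl; rewrite mem_rcons in_cons => /orP [/eqP El|Hl].
          by subst l; left; exists (t, v); [rewrite mem_rcons mem_head|apply/T2; right].
        by left; exists l => //; rewrite mem_rcons in_cons Hl orbT.
      * by right.
    case=> [[l Hl Hz]|Hq].
    * move: Hl; rewrite mem_rcons in_cons => /orP [/eqP El|Hl].
        subst l; move/T2: Hz => [Ez|Hz]; apply/O2; first by left.
        by right; apply/G4; left; exists (t, w0).
      by apply/O2; right; apply/G4; left; exists l => //; rewrite mem_rcons in_cons Hl orbT.
    * by apply/O2; right; apply/G4; right.
Qed.

End M.

Unset Implicit Arguments.
Theorem lemma6 (V : finType) (e : rel V) (u v : V) :
  cactus_network e -> anc e u v ->
  exists st : seq (V * V),
    (forall x y, (x, y) \in links u v st -> exists! p, dpath e x y p) /\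
    (forall s t, (s, t) \in st -> simple_branching e s t) /\
    (forall z, allp_vert e u v z <->
       (exists2 l, l \in links u v st & allp_vert e l.1 l.2 z) \/
       (exists2 q, q \in st & sbp_vert e q.1 q.2 z)) /\
    (forall a b, allp_edge e u v a b <->
       (exists2 l, l \in links u v st & allp_edge e l.1 l.2 a b) \/
       (exists2 q, q \in st & sbp_edge e q.1 q.2 a b)).
Proof.
move=> cn Huv; exact: (main cn (n := (#|[set x | connect e x v]|).+1) (ltnSn _) Huv).
Qed.
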